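(* For every $i\in\mathbb N$, the subgroup $G_i^\infty=\langle a_i,a_{i+1},\dots\rangle$ of $G'$ is undistorted: for every element of $G_i^\infty$, its word length with respect to $\{a_i,a_{i+1},\dots\}$ equals its word length in $G'$ with respect to $\{a_0,a_1,\dots\}$.
   Context: Fix an integer $p\ge20$. $G'=\langle a_0,a_1,a_2,\dots\mid a_j^{-1}a_{j-1}a_j=a_{j-1}^p\ (j\ge1)\rangle$, with word metric relative to $\{a_0,a_1,\dots\}$. *)

(* Defs.v *)
From mathcomp Require Import all_boot.
Set Implicit Arguments. Unset Strict Implicit. Unset Printing Implicit Defensive.

(* A letter (j, false) stands for a_j, and (j, true) for a_j^{-1}. *)
Definition letter := (nat * bool)%type.
Definition word := seq letter.

Definition linv (x : letter) : letter := (x.1, ~~ x.2).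

(* Defining relators of G' : a_j^{-1} a_{j-1} a_j = a_{j-1}^p, j >= 1,
   together with the free-group cancellations x x^{-1} = 1. *)
Inductive base_rel (p : nat) : word -> word -> Prop :=
| br_cancel (x : letter) : base_rel p [:: x; linv x] [::]
| br_relator (j : nat) : 0 < j ->
    base_rel p [:: (j, true); (j.-1, false); (j, false)] (nseq p (j.-1, false)).

Inductive Gequiv (p : nat) : word -> word -> Prop :=
| ge_step (u v l r : word) : base_rel p l r -> Gequiv p (u ++ l ++ v) (u ++ r ++ v)
| ge_refl (w : word) : Gequiv p w w
| ge_sym (w1 w2 : word) : Gequiv p w1 w2 -> Gequiv p w2 w1
| ge_trans (w1 w2 w3 : word) : Gequiv p w1 w2 -> Gequiv p w2 w3 -> Gequiv p w1 w3.

Definition geq_idx (i : nat) : pred letter := fun x => i <= x.1.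

Definition wordlen (p : nat) (S : pred letter) (w : word) (n : nat) : Prop :=
  (exists w' : word, all S w' /\ size w' = n /\ Gequiv p w' w) /\
  (forall w' : word, all S w' -> Gequiv p w' w -> n <= size w').

(* Main.v *)
Require Import Defs.
From mathcomp Require Import all_boot.


Lemma filter_geq_rel p i l r : base_rel p l r ->
  Gequiv p (filter (geq_idx i) l) (filter (geq_idx i) r).
Proof.
case=> [[j b]|j hj] /=.
  rewrite /geq_idx /=; case: (i <= j) => /=.
    exact: (ge_step [::] [::] (br_cancel p (j, b))).
  exact: ge_refl.
rewrite /geq_idx /= filter_nseq /=.
case: (leqP i j.-1) => h1.
  have h2 : i <= j by apply: leq_trans h1 (leq_pred _).
  rewrite h2 /=.
  have := ge_step [::] [::] (br_relator p hj); rewrite /= cats0 mul1n; exact.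
rewrite /=.
case: (leqP i j) => h2 /=.
  exact: (ge_step [::] [::] (br_cancel p (j, true))).
exact: ge_refl.
Qed.

Lemma Gequiv_ctx p a b u v : Gequiv p u v -> Gequiv p (a ++ u ++ b) (a ++ v ++ b).
Proof.
elim=> {u v} [u v l r hr|w|w1 w2 _ IH|w1 w2 w3 _ IH1 _ IH2].
- have := ge_step (a ++ u) (v ++ b) hr.
  by rewrite -!catA.
- exact: ge_refl.
- exact: ge_sym.
- exact: ge_trans IH2.
Qed.

Lemma filter_geq p i u v : Gequiv p u v ->
  Gequiv p (filter (geq_idx i) u) (filter (geq_idx i) v).
Proof.
elim=> {u v} [u v l r hr|w|w1 w2 _ IH|w1 w2 w3 _ IH1 _ IH2].
- rewrite !filter_cat; exact: Gequiv_ctx (filter_geq_rel _ i _ _ hr).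
- exact: ge_refl.
- exact: ge_sym.
- exact: ge_trans IH2.
Qed.

Theorem corollary5p3 (p : nat) (hp : 20 <= p) (i : nat) (w : word) :
  all (geq_idx i) w ->
  forall n : nat, wordlen p (geq_idx i) w n <-> wordlen p predT w n.
Proof.
move=> hw n; split.
- case=> [[w' [h1 [h2 h3]]] hmin]; split.
    by exists w'; rewrite all_predT.
  move=> w'' _ he.
  have := filter_geq _ i _ _ he; rewrite (all_filterP hw) => he'.
  apply: leq_trans (hmin _ (filter_all _ _) he') _.
  by rewrite size_filter count_size.
- case=> [[w' [h1 [h2 h3]]] hmin]; split; last first.
    by move=> w'' _ he; apply: hmin => //; rewrite all_predT.
  have := filter_geq _ i _ _ h3; rewrite (all_filterP hw) => he'.
  exists (filter (geq_idx i) w'); split; first exact: filter_all.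
  split=> //.
  apply/eqP; rewrite eqn_leq.
  apply/andP; split; first by rewrite -h2 size_filter count_size.
  by apply: hmin => //; rewrite all_predT.
Qed.
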